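(* With the notation of the context, for every $\alpha\in\mathbb{R}$ the set $$\varphi(\ell_\alpha)\cap M=\left\{\left(x_j^*,\ \alpha+\frac{\lambda x_j}{d}\bmod\frac1d\right):\ j\in\mathbb{Z}\right\}$$ is a dense subset of $$L_\alpha:=\left\{\left(\xi,\ \alpha-\frac{\lambda^*}{d}\xi\bmod\frac1d\right):\ 0\le\xi<\cos\theta+\sin\theta\right\}\subset M.$$
   Context: Let $0<\theta<\pi/2$ with $\tan\theta$ irrational, $\epsilon=\cos\theta+\sin\theta$, $\Lambda_F=\{m\cos\theta-n\sin\theta:\ m,n\in\mathbb{Z},\ 0\le m\sin\theta+n\cos\theta<\epsilon\}$, $\Lambda=\Lambda_F\times\mathbb{Z}$. For $x=m\cos\theta-n\sin\theta$ ($m,n\in\mathbb{Z}$) put $x^*=m\sin\theta+n\cos\theta$. Enumerate $\Lambda_F=\{x_j\}_{j\in\mathbb{Z}}$ increasingly with $x_0=0$. Let $a,b,d\in\mathbb{Z}$ be relatively prime (gcd$(a,b,d)=1$) with $d>0$, $\lambda=a\cos\theta-b\sin\theta$, $\lambda^*=a\sin\theta+b\cos\theta$. Let $X$ be the quotient of $[0,\cos\theta)\times[0,1/d]\times[0,\cos\theta]\cup[\cos\theta,\cos\theta+\sin\theta)\times[0,1/d]\times[0,\sin\theta]$ by $(\xi,0,\zeta)\sim(\xi,1/d,\zeta)$, $(\xi,\eta,\cos\theta)\sim(\xi+\sin\theta,\eta,0)$ for $0\le\xi<\cos\theta$, and $(\xi,\eta,\sin\theta)\sim(\xi-\cos\theta,\eta,0)$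 for $\cos\theta\le\xi<\cos\theta+\sin\theta$. Define $\varphi:\mathbb{R}^2\to X$ by $\varphi(x,y)=(x_j^*,\ y\bmod\frac1d,\ x-x_j)$ for $x_j\le x<x_{j+1}$. Let $M=[0,\cos\theta+\sin\theta)\times[0,1/d]$ with $(\xi,0)\sim(\xi,1/d)$ (i.e. second coordinate taken in $\mathbb{R}/\frac1d\mathbb{Z}$), identified with $M\times\{0\}\subset X$. For $\alpha\in\mathbb{R}$, $\ell_\alpha=\{(t,\alpha+t\lambda/d):\ t\in\mathbb{R}\}$. *)

(* Defs.v *)
From Stdlib Require Import Reals Lra Lia ZArith.
Open Scope R_scope.

(* a mod c, with result in [0,c) for c > 0 (floor = Int_part) *)
Definition Rmod (a c : R) : R := a - c * IZR (Int_part (a / c)).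

Definition eps (th : R) : R := cos th + sin th.

Definition pt (th : R) (m n : Z) : R := IZR m * cos th - IZR n * sin th.
Definition star (th : R) (m n : Z) : R := IZR m * sin th + IZR n * cos th.

(* (m,n) lies in the window, i.e. pt th m n is in Lambda_F *)
Definition window (th : R) (m n : Z) : Prop := 0 <= star th m n < eps th.

Definition lam (th : R) (a b : Z) : R := IZR a * cos th - IZR b * sin th.
Definition lamstar (th : R) (a b : Z) : R := IZR a * sin th + IZR b * cos th.

(* phi_rel th d x y p : p is the representative (x_j^*, y mod 1/d, x - x_j)
   of phi(x,y), where x_j = pt th m n is the largest element of Lambda_F
   with x_j <= x (i.e. x_j <= x < x_{j+1}). *)
Definition phi_rel (th : R) (d : Z) (x y : R) (p : R * R * R) : Prop :=
  exists m n : Z,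
    window th m n /\ pt th m n <= x /\
    (forall m' n' : Z, window th m' n' -> pt th m' n' <= x ->
                       pt th m' n' <= pt th m n) /\
    p = (star th m n, Rmod y (/ IZR d), x - pt th m n).

(* phi(l_alpha) ∩ M, with M identified with M x {0} in X *)
Definition phi_line_cap_M (th : R) (a b d : Z) (al : R) (q : R * R) : Prop :=
  exists t : R,
    phi_rel th d t (al + t * lam th a b / IZR d) (fst q, snd q, 0).

Definition Sset (th : R) (a b d : Z) (al : R) (q : R * R) : Prop :=
  exists m n : Z, window th m n /\
    q = (star th m n, Rmod (al + lam th a b * pt th m n / IZR d) (/ IZR d)).

Definition Lset (th : R) (a b d : Z) (al : R) (q : R * R) : Prop :=
  0 <= fst q < eps th /\
  snd q = Rmod (al - lamstar th a b / IZR d * fst q) (/ IZR d).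

(* A is dense in B, for subsets of M = [0,eps) x R/(1/d)Z
   (product of the usual topology and the circle topology). *)
Definition dense_in_M (d : Z) (A B : R * R -> Prop) : Prop :=
  forall p, B p -> forall delta, 0 < delta ->
    exists q, A q /\ Rabs (fst p - fst q) < delta /\
      exists k : Z, Rabs (snd p - snd q - IZR k / IZR d) < delta.

(* Main.v *)
Require Import Defs.
From Stdlib Require Import Reals Lra Lia ZArith Classical.
Open Scope R_scope.

Lemma up_shift (r : R) (k : Z) : up (r + IZR k) = (up r + k)%Z.
Proof.
  symmetry; apply tech_up; rewrite plus_IZR; destruct (archimed r); lra.
Qed.

Lemma Rmod_shift (y c : R) (k : Z) : c <> 0 -> Rmod (y + IZR k * c) c = Rmod y c.
Proof.
  intro Hc; unfold Rmod, Int_part.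
  replace ((y + IZR k * c)/c) with (y/c + IZR k) by (field; auto).
  rewrite up_shift, !minus_IZR, plus_IZR. ring.
Qed.

Lemma star_lin th m n k m0 n0 :
  star th (m - k*m0) (n - k*n0) = star th m n - IZR k * star th m0 n0.
Proof. unfold star; rewrite !minus_IZR, !mult_IZR; ring. Qed.

Lemma star_mul th k m n : star th (k*m) (k*n) = IZR k * star th m n.
Proof. unfold star; rewrite !mult_IZR; ring. Qed.

Lemma multiple th g0 m0 n0 : 0 < g0 -> g0 = star th m0 n0 ->
  (forall m n, 0 < star th m n -> g0 <= star th m n) ->
  forall m n, exists k, star th m n = IZR k * g0.
Proof.
  intros Hg Heq Hlb m n.
  set (x := star th m n).
  destruct (archimed (x / g0)) as [H1 H2].
  exists (up (x/g0) - 1)%Z.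
  set (k := (up (x/g0) - 1)%Z).
  assert (Hk1 : IZR k <= x / g0) by (unfold k; rewrite minus_IZR; simpl; lra).
  assert (Hk2 : x / g0 < IZR k + 1) by (unfold k; rewrite minus_IZR; simpl; lra).
  assert (E : x = (x/g0) * g0) by (field; lra).
  assert (A : IZR k * g0 <= x) by (rewrite E; apply Rmult_le_compat_r; lra).
  assert (B : x < IZR k * g0 + g0).
  { rewrite E. replace (IZR k * g0 + g0) with ((IZR k + 1) * g0) by ring.
    apply Rmult_lt_compat_r; lra. }
  destruct (Req_dec x (IZR k * g0)) as [e|ne]; [exact e|].
  exfalso.
  assert (P : 0 < star th (m - k*m0) (n - k*n0)).
  { rewrite star_lin, <- Heq. fold x. lra. }
  specialize (Hlb _ _ P). rewrite star_lin, <- Heq in Hlb. fold x in Hlb. lra.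
Qed.

Lemma small_pos th
  (Hs : 0 < sin th) (Hc : 0 < cos th)
  (Hirr : ~ exists p q : Z, q <> 0%Z /\ tan th = IZR p / IZR q) :
  forall e, 0 < e -> exists m n, 0 < star th m n < e.
Proof.
  set (E := fun r => exists m n, 0 < star th m n /\ r = - star th m n).
  assert (Hb : bound E).
  { exists 0. intros r [m [n [H1 H2]]]. lra. }
  assert (Hne : exists x, E x).
  { exists (- star th 0 1). exists 0%Z, 1%Z. split; [|reflexivity].
    unfold star; simpl; lra. }
  destruct (completeness E Hb Hne) as [M [Hub Hleast]].
  set (g0 := - M).
  assert (Hlow : forall m n, 0 < star th m n -> g0 <= star th m n).
  { intros m n H. assert (- star th m n <= M) by (apply Hub; exists m, n; auto).
    unfold g0; lra. }
  assert (Hg0 : 0 <= g0).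
  { assert (M <= 0). { apply Hleast. intros r [m [n [H1 H2]]]. lra. } unfold g0; lra. }
  assert (Hhelp : forall y, g0 < y -> exists m n, 0 < star th m n < y).
  { intros y Hy. destruct (classic (exists m n, 0 < star th m n < y)) as [h|h]; [exact h|].
    exfalso.
    assert (M <= - y).
    { apply Hleast. intros r [m [n [H1 H2]]].
      destruct (Rlt_dec (star th m n) y) as [l|l].
      - exfalso; apply h; exists m, n; lra.
      - lra. }
    unfold g0 in Hy; lra. }
  intros e He.
  destruct (Rle_dec g0 0) as [Hz|Hz].
  { apply Hhelp; lra. }
  exfalso.
  assert (Hpos : 0 < g0) by lra.
  destruct (classic (exists m0 n0, g0 = star th m0 n0)) as [[m0 [n0 Hin]]|Hnot].
  - destruct (multiple th g0 m0 n0 Hpos Hin Hlow 1 0) as [k1 Hk1].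
    destruct (multiple th g0 m0 n0 Hpos Hin Hlow 0 1) as [k2 Hk2].
    unfold star in Hk1, Hk2; simpl in Hk1, Hk2.
    assert (Hk2' : k2 <> 0%Z).
    { intro z; subst k2; simpl in Hk2; lra. }
    apply Hirr. exists k1, k2. split; [exact Hk2'|].
    unfold tan.
    assert (IZR k2 <> 0) by (apply not_0_IZR; auto).
    replace (sin th) with (IZR k1 * g0) by lra.
    replace (cos th) with (IZR k2 * g0) by lra.
    field; split; lra.
  - destruct (Hhelp (2*g0)) as [m1 [n1 [A1 B1]]]; [lra|].
    assert (C1 : g0 < star th m1 n1).
    { destruct (Req_dec g0 (star th m1 n1)) as [e1|e1].
      - exfalso; apply Hnot; exists m1, n1; auto.
      - specialize (Hlow _ _ A1); lra. }
    destruct (Hhelp _ C1) as [m2 [n2 [A2 B2]]].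
    assert (P : 0 < star th (m1 - 1*m2) (n1 - 1*n2)).
    { rewrite star_lin; simpl; lra. }
    assert (g0 <= star th m2 n2) by (apply Hlow; auto).
    specialize (Hlow _ _ P). rewrite star_lin in Hlow. simpl in Hlow.
    lra.
Qed.

Lemma dense_star th
  (Hs : 0 < sin th) (Hc : 0 < cos th)
  (Hirr : ~ exists p q : Z, q <> 0%Z /\ tan th = IZR p / IZR q) :
  forall x e, 0 < e -> exists m n, x < star th m n < x + e.
Proof.
  intros x e He.
  destruct (small_pos th Hs Hc Hirr e He) as [mh [nh [A B]]].
  set (h := star th mh nh) in *.
  destruct (archimed (x / h)) as [H1 H2].
  exists (up (x/h) * mh)%Z, (up (x/h) * nh)%Z.
  rewrite star_mul. fold h.
  assert (E : x = (x/h) * h) by (field; lra).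
  split.
  - rewrite E at 1. apply Rmult_lt_compat_r; lra.
  - assert (IZR (up (x/h)) * h <= (x/h + 1) * h) by (apply Rmult_le_compat_r; lra).
    assert ((x/h+1)*h = x + h) by (field; lra).
    lra.
Qed.

Lemma key th a b m n : sin th ^ 2 + cos th ^ 2 = 1 ->
  lam th a b * pt th m n + lamstar th a b * star th m n = IZR (a*m + b*n).
Proof.
  intro H. unfold lam, pt, lamstar, star. rewrite plus_IZR, !mult_IZR.
  transitivity ((IZR a * IZR m + IZR b * IZR n) * (sin th ^ 2 + cos th ^ 2)); [ring|].
  rewrite H; ring.
Qed.

Lemma Rmod_form y c : exists j, Rmod y c = y - IZR j * c.
Proof. exists (Int_part (y/c)). unfold Rmod; ring. Qed.

Theorem mainTheorem5 (th : R) (a b d : Z)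
  (Hth : 0 < th < PI / 2)
  (Hirr : ~ exists p q : Z, q <> 0%Z /\ tan th = IZR p / IZR q)
  (Hd : (0 < d)%Z)
  (Hgcd : Z.gcd (Z.gcd a b) d = 1%Z) :
  forall al : R,
    (forall q, phi_line_cap_M th a b d al q <-> Sset th a b d al q) /\
    (forall q, Sset th a b d al q -> Lset th a b d al q) /\
    dense_in_M d (Sset th a b d al) (Lset th a b d al).
Proof.
  intro al.
  assert (Hs : 0 < sin th) by (apply sin_gt_0; lra).
  assert (Hc : 0 < cos th) by (apply cos_gt_0; lra).
  assert (Hsc : sin th ^ 2 + cos th ^ 2 = 1).
  { pose proof (sin2_cos2 th) as H. unfold Rsqr in H. simpl. lra. }
  assert (Hdr : 1 <= IZR d) by (apply IZR_le; lia).
  assert (Hd0 : IZR d <> 0) by lra.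
  assert (Hid : / IZR d <> 0) by (apply Rinv_neq_0_compat; auto).
  assert (Hmodeq : forall m n, Rmod (al + lam th a b * pt th m n / IZR d) (/ IZR d)
              = Rmod (al - lamstar th a b / IZR d * star th m n) (/ IZR d)).
  { intros m n. rewrite <- (Rmod_shift (al - lamstar th a b / IZR d * star th m n) _ (a*m+b*n)%Z Hid).
    f_equal. rewrite <- (key th a b m n Hsc). field; auto. }
  split; [|split].
  - intros [q1 q2]; split.
    + intros [t [m [n [W [Hle [Hmax Heq]]]]]].
      simpl in Heq. injection Heq as E1 E2 E3.
      exists m, n. split; [exact W|].
      assert (t = pt th m n) by lra. subst t q1 q2.
      f_equal. f_equal. unfold Rdiv. ring.
    + intros [m [n [W Heq]]]. exists (pt th m n), m, n.
      split; [exact W|]. split; [lra|]. split; [intros; auto|].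
      injection Heq as E1 E2. simpl. rewrite E1, E2.
      f_equal; [f_equal; f_equal; f_equal; unfold Rdiv; ring | ring].
  - intros q [m [n [W Heq]]]. subst q. unfold Lset; simpl.
    unfold window, eps in W. unfold eps. split; [lra|]. apply Hmodeq.
  - intros p [Hp1 Hp2] delta Hdel.
    set (ls := lamstar th a b) in *.
    set (dl := Rmin delta (delta * IZR d / (Rabs ls + 1))).
    assert (Hdl : 0 < dl).
    { unfold dl; apply Rmin_glb_lt; [lra|].
      apply Rdiv_lt_0_compat; [nra| pose proof (Rabs_pos ls); lra]. }
    set (e := Rmin dl (eps th - fst p)).
    assert (He : 0 < e) by (unfold e; apply Rmin_glb_lt; lra).
    destruct (dense_star th Hs Hc Hirr (fst p) e He) as [m [n [G1 G2]]].
    assert (e <= dl) by apply Rmin_l.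
    assert (e <= eps th - fst p) by apply Rmin_r.
    assert (dl <= delta * IZR d / (Rabs ls + 1)) by apply Rmin_r.
    assert (dl <= delta) by apply Rmin_l.
    exists (star th m n, Rmod (al + lam th a b * pt th m n / IZR d) (/ IZR d)).
    split.
    { exists m, n. split; [unfold window; lra| reflexivity]. }
    simpl. split.
    { rewrite Rabs_minus_sym, Rabs_pos_eq; lra. }
    rewrite Hmodeq, Hp2. fold ls.
    destruct (Rmod_form (al - ls / IZR d * fst p) (/ IZR d)) as [j1 J1].
    destruct (Rmod_form (al - ls / IZR d * star th m n) (/ IZR d)) as [j2 J2].
    rewrite J1, J2. exists (j2 - j1)%Z. rewrite minus_IZR.
    replace (al - ls / IZR d * fst p - IZR j1 * / IZR d -
      (al - ls / IZR d * star th m n - IZR j2 * / IZR d) - (IZR j2 - IZR j1) / IZR d)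
      with (ls * (star th m n - fst p) / IZR d) by (field; auto).
    unfold Rdiv. rewrite !Rabs_mult, (Rabs_pos_eq (/ IZR d)) by (left; apply Rinv_0_lt_compat; lra).
    rewrite (Rabs_pos_eq (star th m n - fst p)) by lra.
    assert (Hx : star th m n - fst p < delta * IZR d / (Rabs ls + 1)) by lra.
    assert (Rabs ls * (star th m n - fst p) <= Rabs ls * (delta * IZR d / (Rabs ls + 1))).
    { apply Rmult_le_compat_l; [apply Rabs_pos|lra]. }
    assert (Rabs ls * (delta * IZR d / (Rabs ls + 1)) < delta * IZR d).
    { pose proof (Rabs_pos ls).
      replace (Rabs ls * (delta * IZR d / (Rabs ls + 1))) with
        (delta * IZR d * (Rabs ls / (Rabs ls + 1))) by (field; lra).
      rewrite <- (Rmult_1_r (delta * IZR d)) at 2.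
      apply Rmult_lt_compat_l; [nra|].
      apply (Rmult_lt_reg_r (Rabs ls + 1)); [lra|].
      unfold Rdiv; rewrite Rmult_assoc, Rinv_l by lra. lra. }
    apply (Rmult_lt_reg_r (IZR d)); [lra|].
    rewrite Rmult_assoc, Rinv_l by lra. lra.
Qed.
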